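(* Let $O=(O_i)_{i\in\overline{\mathbb V}}\in\mathbb R_+^{\overline{\mathbb V}}$ with $O_i=T_i$ for $i\in\partial\mathbb V$, and let $K=(K_i)_{i\in\overline{\mathbb V}}\in\mathbb N_0^{\overline{\mathbb V}}$. Then for every $t\ge0$, $\mathbb E_O\left(\prod_{i\in\overline{\mathbb V}}O_i(t)^{K_i}\right)=\mathbb E_K\left(\prod_{i\in\overline{\mathbb V}}O_i^{K_i(t)}\right),$ where on the left the expectation is over the opinion process $O(t)$ started from $O$ (with $K$ fixed), and on the right over the absorbed discrete KMP process $K(t)$ started from $K$ (with $O$ fixed).
   Context: Graph: $(\overline{\mathbb V},\overline E)$ is a finite oriented graph; $\overline{\mathbb V}=\mathbb V\cup\partial\mathbb V$ (internal and boundary vertices). $E$ is the set of edges with both endpoints in $\mathbb V$, $\partial E$ the set of edges with one endpoint in $\partial\mathbb V$; no edges join two boundary vertices; every boundary edge is written $ij$ with $i\in\mathbb V$, $j\in\partial\mathbb V$; $\overline E=E\cup\partial E$, at most one edge per pair of vertices. Each $j\in\partial\mathbb V$ carries a fixed value $T_j>0$. $\mathbb N_0=\{0,1,2,\dots\}$. Opinion process: Markov process on $\mathbb R_+^{\overline{\mathbb V}}$ with $O_j\equiv T_j$ for $j\in\partial\mathbb V$ and generator $L^Of(O)=\sum_{ij\in\overline E}\int_0^1dv\,[f(H^O_{ij;v}O)-f(O)]$, where $(H^O_{ij;v}O)_\ell=vO_i+(1-v)O_j$ for $\ell\in\{i,j\}\cap\mathbb V$ and $(H^O_{ij;v}O)_\ell=O_\ell$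 otherwise. Absorbed discrete KMP process: Markov process on $\mathbb N_0^{\overline{\mathbb V}}$ with generator $L^K_0f(\underline k)=\sum_{ij\in E}\frac1{k_i+k_j+1}\sum_{h=0}^{k_i+k_j}[f(H_{ij;h}\underline k)-f(\underline k)]+\sum_{ij\in\partial E}\frac1{k_i+1}\sum_{h=0}^{k_i}[f(H_{ij;h}\underline k)-f(\underline k)]$, where $(H_{ij;h}\underline k)_i=h$, $(H_{ij;h}\underline k)_j=k_i+k_j-h$, and other coordinates unchanged. *)

(* Defs.v *)
From Stdlib Require Import Bool Reals List Arith Lra.
From Coquelicot Require Import Coquelicot.
Open Scope R_scope.

(* Vertices are natural numbers; configurations are functions on vertices
   (coordinates outside V-bar are irrelevant). An oriented edge is a pair (i,j). *)

Definition inb (l : nat) (s : list nat) : bool :=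
  existsb (fun x => Nat.eqb x l) s.

Definition sumR {A} (f : A -> R) (s : list A) : R :=
  fold_right (fun a acc => f a + acc) 0 s.

Definition prodR {A} (f : A -> R) (s : list A) : R :=
  fold_right (fun a acc => f a * acc) 1 s.

Definition wf_graph (intV bdV : list nat) (E dE : list (nat * nat)) : Prop :=
  NoDup (intV ++ bdV) /\
  (forall e, In e E -> In (fst e) intV /\ In (snd e) intV /\ fst e <> snd e) /\
  (forall e, In e dE -> In (fst e) intV /\ In (snd e) bdV) /\
  NoDup (E ++ dE) /\
  (forall i j, In (i, j) (E ++ dE) -> ~ In (j, i) (E ++ dE)).

Definition HO (intV : list nat) (e : nat * nat) (v : R) (O : nat -> R) : nat -> R :=
  fun l => if andb (orb (Nat.eqb l (fst e)) (Nat.eqb l (snd e))) (inb l intV)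
           then v * O (fst e) + (1 - v) * O (snd e) else O l.

Definition LO (intV : list nat) (E dE : list (nat * nat))
    (f : (nat -> R) -> R) : (nat -> R) -> R :=
  fun O => sumR (fun e => RInt (fun v => f (HO intV e v O) - f O) 0 1) (E ++ dE).

Definition HK (e : nat * nat) (h : nat) (k : nat -> nat) : nat -> nat :=
  fun l => if Nat.eqb l (fst e) then h
           else if Nat.eqb l (snd e) then (k (fst e) + k (snd e) - h)%nat
           else k l.

Definition LK (E dE : list (nat * nat)) (f : (nat -> nat) -> R) : (nat -> nat) -> R :=
  fun k =>
    sumR (fun e => / INR (k (fst e) + k (snd e) + 1) *
            sumR (fun h => f (HK e h k) - f k) (seq 0 (k (fst e) + k (snd e) + 1)))
         E
  + sumR (fun e => / INR (k (fst e) + 1) *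
            sumR (fun h => f (HK e h k) - f k) (seq 0 (k (fst e) + 1)))
         dE.

Fixpoint iterL {X : Type} (L : (X -> R) -> (X -> R)) (n : nat) (f : X -> R) : X -> R :=
  match n with O => f | S n => L (iterL L n f) end.

(* [sg_value L f t x l] : E_x[f(X(t))] = (e^{tL} f)(x) = l, i.e. the series
   sum_n t^n/n! (L^n f)(x) converges to l. Both processes have bounded total jump
   rate |E-bar|, so e^{tL} is their Markov semigroup. *)
Definition sg_value {X : Type} (L : (X -> R) -> (X -> R)) (f : X -> R) (t : R) (x : X)
    (l : R) : Prop :=
  is_series (fun n => t ^ n / INR (fact n) * iterL L n f x) l.

Definition Dual (intV bdV : list nat) (O : nat -> R) (K : nat -> nat) : R :=
  prodR (fun i => O i ^ K i) (intV ++ bdV).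

(* Main.v *)
Require Import Defs.
From Stdlib Require Import Bool Reals List Lra Lia Arith FunctionalExtensionality.
From Coquelicot Require Import Coquelicot.
Open Scope R_scope.

Lemma sumR_app {A} (f : A -> R) l1 l2 : sumR f (l1 ++ l2) = sumR f l1 + sumR f l2.
Proof. induction l1; simpl; [lra|]. rewrite IHl1; lra. Qed.

Lemma sumR_ext {A} (f g : A -> R) l : (forall x, In x l -> f x = g x) -> sumR f l = sumR g l.
Proof. induction l; simpl; intros H; [lra|]. rewrite H, IHl; auto. Qed.

Lemma sumR_plus {A} (f g : A -> R) l : sumR (fun x => f x + g x) l = sumR f l + sumR g l.
Proof. induction l; simpl; [lra|]. rewrite IHl; lra. Qed.

Lemma sumR_minus {A} (f g : A -> R) l : sumR (fun x => f x - g x) l = sumR f l - sumR g l.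
Proof. induction l; simpl; [lra|]. rewrite IHl; lra. Qed.

Lemma sumR_scal {A} (f : A -> R) c l : sumR (fun x => c * f x) l = c * sumR f l.
Proof. induction l; simpl; [lra|]. rewrite IHl; lra. Qed.

Lemma sumR_const {A} c (l : list A) : sumR (fun _ => c) l = INR (length l) * c.
Proof. induction l; simpl length; simpl sumR; [simpl; lra|]. rewrite IHl, S_INR; lra. Qed.

Lemma sumR_comm {A B} (f : A -> B -> R) la lb :
  sumR (fun a => sumR (fun b => f a b) lb) la = sumR (fun b => sumR (fun a => f a b) la) lb.
Proof.
  induction la; simpl.
  - induction lb; simpl; lra.
  - rewrite IHla, <- sumR_plus. reflexivity.
Qed.

Lemma sumR_abs {A} (f : A -> R) l : Rabs (sumR f l) <= sumR (fun x => Rabs (f x)) l.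
Proof. induction l; simpl. rewrite Rabs_R0; lra.
  eapply Rle_trans. apply Rabs_triang. lra. Qed.

Lemma sumR_le {A} (f g : A -> R) l : (forall x, In x l -> f x <= g x) -> sumR f l <= sumR g l.
Proof. induction l; simpl; intros H; [lra|]. apply Rplus_le_compat; auto. Qed.

Definition GS (a b : R) (n : nat) := sumR (fun h => a ^ h * b ^ (n - h)) (seq 0 (S n)).

Lemma GS_S a b n : GS a b (S n) = b * GS a b n + a ^ (S n).
Proof.
  unfold GS. rewrite (seq_S (S n)), sumR_app. simpl (sumR _ (_ :: nil)).
  rewrite <- sumR_scal. 
  replace (a ^ S n) with (a ^ (0 + S n) * b ^ (S n - (0 + S n)) + 0).
  2:{ rewrite Nat.add_0_l, Nat.sub_diag. simpl; ring. }
  f_equal. apply sumR_ext. intros h Hh. apply in_seq in Hh.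
  replace (S n - h)%nat with (S (n - h)) by lia. simpl; lra.
Qed.

Lemma GS_id a b n : (a - b) * GS a b n = a ^ (S n) - b ^ (S n).
Proof.
  induction n.
  - unfold GS; simpl; lra.
  - rewrite GS_S. replace ((a - b) * (b * GS a b n + a ^ S n)) with
      (b * ((a-b) * GS a b n) + (a - b) * a ^ S n) by ring.
    rewrite IHn. simpl. ring.
Qed.

Lemma int_pow a b n :
  is_RInt (fun v => (v * a + (1 - v) * b) ^ n) 0 1 (/ INR (S n) * GS a b n).
Proof.
  destruct (Req_dec a b) as [<-|Hab].
  - apply is_RInt_ext with (fun _ => a ^ n).
    { intros x _. f_equal. ring. }
    replace (/ INR (S n) * GS a a n) with (scal (1 - 0) (a ^ n)).
    apply (is_RInt_const (V:=R_NormedModule)).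
    unfold GS. rewrite (sumR_ext _ (fun _ => a ^ n)).
    rewrite sumR_const, length_seq, S_INR. unfold scal; simpl; unfold mult; simpl.
    field. pose proof (pos_INR n); lra.
    intros h Hh; apply in_seq in Hh. rewrite <- pow_add. f_equal; lia.
  - set (F := fun v => (v * a + (1 - v) * b) ^ (S n) / (INR (S n) * (a - b))).
    replace (/ INR (S n) * GS a b n) with (minus (F 1) (F 0)).
    apply (is_RInt_derive (V:=R_CompleteNormedModule) F).
    + intros x _. unfold F. auto_derive; auto.
      change (match n with 0%nat => 1 | S _ => INR n + 1 end) with (INR (S n)).
      rewrite S_INR. replace (1 + - x) with (1 - x) by ring.
      set (y := (x * a + (1 - x) * b) ^ n).
      assert (INR n + 1 <> 0) by (pose proof (pos_INR n); lra).
      assert (a - b <> 0) by lra.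
      field. auto.
    + intros x _. apply (ex_derive_continuous (V:=R_NormedModule)). auto_derive; auto.
    + change (@eq R (F 1 - F 0) (/ INR (S n) * GS a b n)). unfold F.
      replace (1 * a + (1 - 1) * b) with a by ring.
      replace (0 * a + (1 - 0) * b) with b by ring.
      assert (Hn : INR (S n) <> 0) by (apply not_0_INR; lia).
      assert (Hd : a - b <> 0) by lra.
      transitivity ((a - b) * GS a b n / (INR (S n) * (a - b))).
      * rewrite GS_id. field. auto.
      * field. auto.
Qed.

Lemma prodR_ext {A} (f g : A -> R) l : (forall x, In x l -> f x = g x) -> prodR f l = prodR g l.
Proof. induction l; simpl; intros H; [lra|]. rewrite H, IHl; auto. Qed.

Lemma prodR_one (f : nat -> R) l i : NoDup l -> In i l ->
  prodR f l = f i * prodR (fun x => if Nat.eqb x i then 1 else f x) l.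
Proof.
  induction l as [|a l IH]; simpl; intros Hnd Hi; [contradiction|].
  inversion Hnd; subst.
  destruct Hi as [<-|Hi].
  - rewrite Nat.eqb_refl. rewrite (prodR_ext (fun x => if Nat.eqb x a then 1 else f x) f l). ring.
    intros x Hx. destruct (Nat.eqb_spec x a); [subst; contradiction|auto].
  - destruct (Nat.eqb_spec a i); [subst; contradiction|].
    rewrite IH by auto. ring.
Qed.

Lemma prodR_two (f : nat -> R) l i j : NoDup l -> In i l -> In j l -> i <> j ->
  prodR f l = f i * f j * prodR (fun x => if orb (Nat.eqb x i) (Nat.eqb x j) then 1 else f x) l.
Proof.
  intros Hnd Hi Hj Hij.
  rewrite (prodR_one f l i), (prodR_one _ l j) by auto.
  destruct (Nat.eqb_spec j i); [congruence|].
  rewrite Rmult_assoc. f_equal. f_equal. apply prodR_ext. intros x _.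
  destruct (Nat.eqb_spec x i), (Nat.eqb_spec x j); simpl; auto.
Qed.

Lemma inb_In l s : inb l s = true <-> In l s.
Proof.
  unfold inb. rewrite existsb_exists. split.
  - intros [x [Hx He]]. apply Nat.eqb_eq in He. subst; auto.
  - intros H. exists l; split; auto. apply Nat.eqb_refl.
Qed.

Lemma int_main a b n C D0 :
  RInt (fun v => (v * a + (1 - v) * b) ^ n * C - D0) 0 1 =
  / INR (n + 1) * sumR (fun h => a ^ h * b ^ (n - h) * C - D0) (seq 0 (n + 1)).
Proof.
  apply is_RInt_unique.
  rewrite Nat.add_1_r.
  replace (/ INR (S n) * sumR (fun h => a ^ h * b ^ (n - h) * C - D0) (seq 0 (S n)))
    with (minus (scal C (/ INR (S n) * GS a b n)) (scal (1 - 0) D0)).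
  - apply (is_RInt_minus (V:=R_NormedModule)).
    + apply is_RInt_ext with (fun v => scal C ((v * a + (1 - v) * b) ^ n)).
      { intros; unfold scal; simpl; unfold mult; simpl. apply Rmult_comm. }
      apply (is_RInt_scal (V:=R_NormedModule)). apply int_pow.
    + apply (is_RInt_const (V:=R_NormedModule)).
  - unfold GS. rewrite sumR_minus, sumR_const, length_seq.
    rewrite (sumR_ext (fun h => a ^ h * b ^ (n - h) * C) (fun h => C * (a ^ h * b ^ (n - h)))) by (intros; ring).
    rewrite sumR_scal. unfold minus, plus, opp, scal; simpl; unfold mult; simpl.
    assert (INR (S n) <> 0) by (apply not_0_INR; lia).
    field. auto.
Qed.

Lemma NoDup_disj (l1 l2 : list nat) a : NoDup (l1 ++ l2) -> In a l1 -> In a l2 -> False.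
Proof.
  induction l1; simpl; intros Hn H1 H2; [auto|]. inversion Hn; subst.
  destruct H1 as [<-|H1]; [apply H3, in_or_app; auto| eauto].
Qed.

Section Edge.
Variables (intV bdV : list nat) (O : nat -> R) (K : nat -> nat).
Hypothesis Hnd : NoDup (intV ++ bdV).

Lemma edge_bulk i j : In i intV -> In j intV -> i <> j ->
  RInt (fun v => Dual intV bdV (HO intV (i, j) v O) K - Dual intV bdV O K) 0 1 =
  / INR (K i + K j + 1) *
    sumR (fun h => Dual intV bdV O (HK (i, j) h K) - Dual intV bdV O K)
         (seq 0 (K i + K j + 1)).
Proof.
  intros Hi Hj Hij.
  assert (Hi' : In i (intV ++ bdV)) by (apply in_or_app; auto).
  assert (Hj' : In j (intV ++ bdV)) by (apply in_or_app; auto).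
  set (R0 := prodR (fun x => if orb (Nat.eqb x i) (Nat.eqb x j) then 1 else O x ^ K x) (intV ++ bdV)).
  unfold Dual.
  rewrite (RInt_ext _ (fun v => (v * O i + (1 - v) * O j) ^ (K i + K j) * R0
                                 - prodR (fun i0 => O i0 ^ K i0) (intV ++ bdV))).
  2:{ intros v _. f_equal.
      rewrite (prodR_two _ _ i j) by auto. unfold HO; simpl fst; simpl snd.
      rewrite !Nat.eqb_refl, (proj2 (inb_In i intV) Hi), (proj2 (inb_In j intV) Hj).
      rewrite orb_true_r. simpl. rewrite pow_add. unfold R0. f_equal.
      apply prodR_ext. intros x _.
      destruct (Nat.eqb_spec x i), (Nat.eqb_spec x j); simpl; auto. }
  rewrite int_main. f_equal. apply sumR_ext. intros h Hh. f_equal.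
  rewrite (prodR_two _ _ i j) by auto. unfold HK; simpl fst; simpl snd.
  rewrite Nat.eqb_refl. destruct (Nat.eqb_spec j i); [congruence|].
  rewrite Nat.eqb_refl. unfold R0. f_equal.
  apply prodR_ext. intros x _.
  destruct (Nat.eqb_spec x i), (Nat.eqb_spec x j); simpl; auto.
Qed.

Lemma edge_bd i j : In i intV -> In j bdV ->
  RInt (fun v => Dual intV bdV (HO intV (i, j) v O) K - Dual intV bdV O K) 0 1 =
  / INR (K i + 1) *
    sumR (fun h => Dual intV bdV O (HK (i, j) h K) - Dual intV bdV O K)
         (seq 0 (K i + 1)).
Proof.
  intros Hi Hj.
  assert (Hi' : In i (intV ++ bdV)) by (apply in_or_app; auto).
  assert (Hj' : In j (intV ++ bdV)) by (apply in_or_app; auto).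
  assert (Hjn : ~ In j intV).
  { intros H. exact (NoDup_disj _ _ _ Hnd H Hj). }
  assert (Hij : i <> j) by (intros ->; contradiction).
  set (R0 := prodR (fun x => if orb (Nat.eqb x i) (Nat.eqb x j) then 1 else O x ^ K x) (intV ++ bdV)).
  unfold Dual.
  rewrite (RInt_ext _ (fun v => (v * O i + (1 - v) * O j) ^ (K i) * (O j ^ K j * R0)
                                 - prodR (fun i0 => O i0 ^ K i0) (intV ++ bdV))).
  2:{ intros v _. f_equal.
      rewrite (prodR_two _ _ i j) by auto. unfold HO; simpl fst; simpl snd.
      rewrite Nat.eqb_refl, (proj2 (inb_In i intV) Hi).
      destruct (inb j intV) eqn:E; [apply inb_In in E; contradiction|].
      destruct (Nat.eqb_spec j i); [congruence|].
      rewrite Nat.eqb_refl. simpl. rewrite Rmult_assoc. f_equal. f_equal. unfold R0.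
      apply prodR_ext. intros x _.
      destruct (Nat.eqb_spec x i), (Nat.eqb_spec x j); simpl; auto. }
  rewrite int_main. f_equal. apply sumR_ext. intros h Hh. apply in_seq in Hh. f_equal.
  rewrite (prodR_two _ _ i j) by auto. unfold HK; simpl fst; simpl snd.
  rewrite Nat.eqb_refl. destruct (Nat.eqb_spec j i); [congruence|].
  rewrite Nat.eqb_refl.
  replace (K i + K j - h)%nat with ((K i - h) + K j)%nat by lia.
  rewrite pow_add. rewrite !Rmult_assoc. f_equal. f_equal. f_equal. unfold R0.
  apply prodR_ext. intros x _.
  destruct (Nat.eqb_spec x i), (Nat.eqb_spec x j); simpl; auto.
Qed.
End Edge.

Lemma dual_gen intV bdV E dE O K : wf_graph intV bdV E dE ->
  LO intV E dE (fun O' => Dual intV bdV O' K) O = LK E dE (fun K' => Dual intV bdV O K') K.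
Proof.
  intros (Hnd & HE & HdE & _).
  unfold LO, LK. rewrite sumR_app. f_equal; apply sumR_ext; intros [i j] He.
  - destruct (HE _ He) as (Hi & Hj & Hij); simpl in *. apply edge_bulk; auto.
  - destruct (HdE _ He) as (Hi & Hj); simpl in *. apply edge_bd; auto.
Qed.

Lemma cont_mult (f g : R -> R) x : continuous f x -> continuous g x ->
  continuous (fun v => f v * g v) x.
Proof. intros. apply (continuous_mult (K:=R_AbsRing) f g x); auto. Qed.

Lemma cont_minus (f g : R -> R) x : continuous f x -> continuous g x ->
  continuous (fun v => f v - g v) x.
Proof. intros. apply (continuous_minus (V:=R_NormedModule) f g x); auto. Qed.

Lemma cont_plus (f g : R -> R) x : continuous f x -> continuous g x ->
  continuous (fun v => f v + g v) x.
Proof. intros. apply (continuous_plus (V:=R_NormedModule) f g x); auto. Qed.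

Lemma cont_const (c x : R) : continuous (fun _ : R => c) x.
Proof. apply (continuous_const (U:=R_UniformSpace) (V:=R_UniformSpace)). Qed.

Lemma cont_pow (f : R -> R) n x : continuous f x -> continuous (fun v => f v ^ n) x.
Proof. intros H. induction n; simpl. apply cont_const. apply cont_mult; auto. Qed.

Lemma cont_prod {A} (F : A -> R -> R) l x : (forall i, continuous (F i) x) ->
  continuous (fun v => prodR (fun i => F i v) l) x.
Proof. intros H. induction l; simpl. apply cont_const. apply cont_mult; auto. Qed.

Lemma cont_sum {A} (F : A -> R -> R) l x : (forall i, continuous (F i) x) ->
  continuous (fun v => sumR (fun i => F i v) l) x.
Proof. intros H. induction l; simpl. apply cont_const. apply cont_plus; auto. Qed.

Lemma cont_dual intV bdV e O K x :
  continuous (fun v => Dual intV bdV (HO intV e v O) K) x.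
Proof.
  unfold Dual. apply (cont_prod (fun i v => HO intV e v O i ^ K i)). intros i.
  apply cont_pow. unfold HO. destruct (_ && _).
  - apply (ex_derive_continuous (V:=R_NormedModule)). auto_derive; auto.
  - apply cont_const.
Qed.

Definition contO intV (O : nat -> R) (f : (nat -> R) -> R) :=
  forall e x, continuous (fun v => f (HO intV e v O)) x.

Lemma RInt_sum {A} (G : A -> R -> R) c :
  (forall p x, continuous (G p) x) ->
  RInt (fun v => sumR (fun p => G p v) c) 0 1 = sumR (fun p => RInt (G p) 0 1) c.
Proof.
  intros H. induction c; simpl.
  - rewrite (RInt_const (V:=R_CompleteNormedModule)). unfold scal; simpl; unfold mult; simpl. ring.
  - rewrite <- IHc.
    apply (RInt_plus (V:=R_CompleteNormedModule) (G a) (fun v => sumR (fun p => G p v) c)).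
    + apply ex_RInt_continuous. intros; auto.
    + apply ex_RInt_continuous. intros. apply (cont_sum G). auto.
Qed.

Lemma LO_sum {A} intV E dE O (F : A -> (nat -> R) -> R) c :
  (forall p, contO intV O (F p)) ->
  LO intV E dE (fun O' => sumR (fun p => F p O') c) O = sumR (fun p => LO intV E dE (F p) O) c.
Proof.
  intros H. unfold LO.
  rewrite (sumR_comm (fun p e => RInt (fun v => F p (HO intV e v O) - F p O) 0 1)).
  apply sumR_ext. intros e _.
  rewrite <- (RInt_sum (fun p v => F p (HO intV e v O) - F p O)).
  - apply RInt_ext. intros. rewrite sumR_minus. reflexivity.
  - intros p x. apply cont_minus. apply H. apply cont_const.
Qed.

Lemma LO_scal intV E dE O (f : (nat -> R) -> R) a :
  contO intV O f ->
  LO intV E dE (fun O' => a * f O') O = a * LO intV E dE f O.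
Proof.
  intros H. unfold LO. rewrite <- sumR_scal. apply sumR_ext. intros e _.
  rewrite <- (RInt_scal (V:=R_CompleteNormedModule)).
  - apply RInt_ext. intros. unfold scal; simpl; unfold mult; simpl. ring.
  - apply ex_RInt_continuous. intros. apply cont_minus. apply H. apply cont_const.
Qed.

Definition lincomb (Phi : ((nat -> nat) -> R) -> R) :=
  exists c : list (R * (nat -> nat)), forall g, Phi g = sumR (fun p => fst p * g (snd p)) c.

Lemma lc_pt k : lincomb (fun g => g k).
Proof. exists ((1, k) :: nil). intros g; simpl; ring. Qed.

Lemma lc_plus P1 P2 : lincomb P1 -> lincomb P2 -> lincomb (fun g => P1 g + P2 g).
Proof. intros [c1 H1] [c2 H2]. exists (c1 ++ c2). intros g. rewrite sumR_app, H1, H2. auto. Qed.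

Lemma lc_scal P a : lincomb P -> lincomb (fun g => a * P g).
Proof.
  intros [c H]. exists (map (fun p => (a * fst p, snd p)) c). intros g. rewrite H.
  rewrite <- sumR_scal. clear H. induction c; simpl; [auto|]. rewrite IHc. ring.
Qed.

Lemma lc_minus P1 P2 : lincomb P1 -> lincomb P2 -> lincomb (fun g => P1 g - P2 g).
Proof.
  intros H1 H2. destruct (lc_plus _ _ H1 (lc_scal _ (-1) H2)) as [c H].
  exists c. intros g. rewrite <- H. ring.
Qed.

Lemma lc_sum {A} (Phi : A -> ((nat -> nat) -> R) -> R) s :
  (forall x, In x s -> lincomb (Phi x)) -> lincomb (fun g => sumR (fun x => Phi x g) s).
Proof.
  induction s; simpl; intros H.
  - exists nil. auto.
  - apply lc_plus; auto.
Qed.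

Lemma lc_LK E dE k : lincomb (fun g => LK E dE g k).
Proof.
  unfold LK. apply lc_plus; apply lc_sum; intros e _; apply lc_scal;
  apply lc_sum; intros h _; apply lc_minus; apply lc_pt.
Qed.

Lemma lc_iter E dE n : forall k, lincomb (fun g => iterL (LK E dE) n g k).
Proof.
  induction n; intros k; simpl.
  - apply lc_pt.
  - destruct (lc_LK E dE k) as [c Hc].
    destruct (lc_sum (fun p g => fst p * iterL (LK E dE) n g (snd p)) c) as [c' Hc'].
    { intros p _. apply lc_scal. apply IHn. }
    exists c'. intros g. rewrite Hc. apply Hc'.
Qed.

Lemma iterL_shift {X} (L : (X -> R) -> (X -> R)) n f :
  iterL L (S n) f = iterL L n (L f).
Proof. induction n; simpl; auto. simpl in IHn. rewrite IHn. auto. Qed.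

Lemma duality_n intV bdV E dE : wf_graph intV bdV E dE -> forall n O K,
  iterL (LO intV E dE) n (fun O' => Dual intV bdV O' K) O =
  iterL (LK E dE) n (fun K' => Dual intV bdV O K') K.
Proof.
  intros Hwf n. induction n; intros O K; [reflexivity|].
  change (iterL (LO intV E dE) (S n) (fun O' => Dual intV bdV O' K) O) with
    (LO intV E dE (iterL (LO intV E dE) n (fun O' => Dual intV bdV O' K)) O).
  destruct (lc_iter E dE n K) as [c Hc].
  replace (iterL (LO intV E dE) n (fun O' => Dual intV bdV O' K)) with
    (fun O' => sumR (fun p => fst p * Dual intV bdV O' (snd p)) c).
  2:{ apply functional_extensionality. intros O'. rewrite IHn, Hc. reflexivity. }
  rewrite (LO_sum intV E dE O (fun p O' => fst p * Dual intV bdV O' (snd p))).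
  2:{ intros p e x. apply cont_mult. apply cont_const. apply cont_dual. }
  rewrite iterL_shift, Hc. apply sumR_ext. intros p _.
  rewrite LO_scal. 2:{ intros e x. apply cont_dual. }
  rewrite dual_gen by auto. reflexivity.
Qed.

Lemma exists_bound (O : nat -> R) s : exists M, 0 <= M /\ forall l, In l s -> Rabs (O l) <= M.
Proof.
  induction s as [|a s [M [HM H]]].
  - exists 0. split; [lra| intros l []].
  - exists (Rmax (Rabs (O a)) M). split. eapply Rle_trans; [apply HM| apply Rmax_r].
    intros l [<-|Hl]. apply Rmax_l. eapply Rle_trans; [apply H; auto| apply Rmax_r].
Qed.

Lemma prodR_abs_le {A} (f g : A -> R) l : (forall x, In x l -> Rabs (f x) <= g x) ->
  Rabs (prodR f l) <= prodR g l.
Proof.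
  induction l; simpl; intros H.
  - rewrite Rabs_R1; lra.
  - rewrite Rabs_mult. apply Rmult_le_compat; try apply Rabs_pos; auto.
Qed.

Section Bound.
Variables (intV bdV : list nat) (E dE : list (nat * nat)) (O : nat -> R) (M : R).
Hypothesis Hwf : wf_graph intV bdV E dE.
Hypothesis HM : 0 <= M.
Hypothesis HO : forall l, In l (intV ++ bdV) -> Rabs (O l) <= M.

Definition Q (k : nat -> nat) := prodR (fun l => M ^ k l) (intV ++ bdV).

Lemma dual_le k : Rabs (Dual intV bdV O k) <= Q k.
Proof.
  apply prodR_abs_le. intros x Hx. rewrite <- RPow_abs. apply pow_incr. split.
  apply Rabs_pos. auto.
Qed.

Lemma Q_inv i j h k : In i (intV ++ bdV) -> In j (intV ++ bdV) -> i <> j ->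
  (h <= k i + k j)%nat -> Q (HK (i, j) h k) = Q k.
Proof.
  intros Hi Hj Hij Hh. destruct Hwf as [Hnd _]. unfold Q.
  rewrite (prodR_two _ _ i j) by auto.
  rewrite (prodR_two (fun l => M ^ k l) _ i j) by auto.
  unfold HK; simpl fst; simpl snd. rewrite !Nat.eqb_refl.
  destruct (Nat.eqb_spec j i); [congruence|].
  rewrite <- !pow_add. replace (h + (k i + k j - h))%nat with (k i + k j)%nat by lia.
  f_equal. apply prodR_ext. intros x _.
  destruct (Nat.eqb_spec x i), (Nat.eqb_spec x j); simpl; auto.
Qed.

Lemma term_bound N (f : nat -> R) B : (0 < N)%nat -> (forall h, In h (seq 0 N) -> Rabs (f h) <= B) ->
  Rabs (/ INR N * sumR f (seq 0 N)) <= B.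
Proof.
  intros HN H. assert (HN' : 0 < INR N) by (apply lt_0_INR; lia).
  rewrite Rabs_mult, Rabs_inv, (Rabs_right (INR N)) by lra.
  apply Rmult_le_reg_l with (INR N); auto. rewrite <- Rmult_assoc, Rinv_r by lra.
  rewrite Rmult_1_l. eapply Rle_trans. apply sumR_abs.
  eapply Rle_trans. apply sumR_le. apply H. rewrite sumR_const, length_seq. lra.
Qed.

Definition Acst := 2 * INR (length E + length dE).

Lemma LK_bound (g : (nat -> nat) -> R) B c :
  (forall k, Q k = c -> Rabs (g k) <= B) -> forall k, Q k = c ->
  Rabs (LK E dE g k) <= Acst * B.
Proof.
  intros H k Hk. pose proof (H k Hk) as HB0. assert (0 <= B) by (pose proof (Rabs_pos (g k)); lra).
  destruct Hwf as (Hnd & HE & HdE & _).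
  unfold LK, Acst. eapply Rle_trans. apply Rabs_triang.
  rewrite plus_INR.
  replace (2 * (INR (length E) + INR (length dE)) * B) with
    (INR (length E) * (2 * B) + INR (length dE) * (2 * B)) by ring.
  rewrite <- !sumR_const.
  apply Rplus_le_compat; (eapply Rle_trans; [apply sumR_abs| apply sumR_le]);
    intros [i j] He; simpl fst; simpl snd.
  - destruct (HE _ He) as (Hi & Hj & Hij); simpl in *.
    apply term_bound. lia. intros h Hh. apply in_seq in Hh.
    eapply Rle_trans. apply Rabs_triang. rewrite Rabs_Ropp.
    assert (Rabs (g (HK (i, j) h k)) <= B); [|lra].
    apply H. rewrite Q_inv; auto; try (apply in_or_app; auto). lia.
  - destruct (HdE _ He) as (Hi & Hj); simpl in *.
    assert (Hij : i <> j). { intros ->. apply (NoDup_disj _ _ _ Hnd Hi Hj). }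
    apply term_bound. lia. intros h Hh. apply in_seq in Hh.
    eapply Rle_trans. apply Rabs_triang. rewrite Rabs_Ropp.
    assert (Rabs (g (HK (i, j) h k)) <= B); [|lra].
    apply H. rewrite Q_inv; auto; try (apply in_or_app; auto). lia.
Qed.


Lemma iter_bound n c : forall k, Q k = c ->
  Rabs (iterL (LK E dE) n (fun K' => Dual intV bdV O K') k) <= Acst ^ n * c.
Proof.
  induction n; intros k Hk; simpl.
  - rewrite Rmult_1_l, <- Hk. apply dual_le.
  - rewrite Rmult_assoc. eapply LK_bound; eauto.
Qed.
End Bound.

Theorem mainTheorem6 (intV bdV : list nat) (E dE : list (nat * nat)) (T : nat -> R)
    (O : nat -> R) (K : nat -> nat) (t : R) :
  wf_graph intV bdV E dE ->
  (forall j, In j bdV -> 0 < T j) ->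
  (forall i, In i (intV ++ bdV) -> 0 <= O i) ->
  (forall j, In j bdV -> O j = T j) ->
  0 <= t ->
  exists l : R,
    sg_value (LO intV E dE) (fun O' => Dual intV bdV O' K) t O l /\
    sg_value (LK E dE) (fun K' => Dual intV bdV O K') t K l.
Proof.
  intros Hwf _ _ _ Ht.
  destruct (exists_bound O (intV ++ bdV)) as [M [HM HOM]].
  set (a := fun n => t ^ n / INR (fact n) * iterL (LK E dE) n (fun K' => Dual intV bdV O K') K).
  assert (Hex : ex_series a).
  { set (A := Acst E dE). set (c := Q intV bdV M K).
    apply (ex_series_le (K:=R_AbsRing) (V:=R_CompleteNormedModule) a
             (fun n => scal c (scal ((A * t) ^ n) (/ INR (fact n))))).
    - intros n. unfold a. change (norm (t ^ n / INR (fact n) * iterL (LK E dE) n (fun K' => Dual intV bdV O K') K))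
        with (Rabs (t ^ n / INR (fact n) * iterL (LK E dE) n (fun K' => Dual intV bdV O K') K)).
      unfold scal; simpl; unfold mult; simpl.
      pose proof (iter_bound intV bdV E dE O M Hwf HOM n c K eq_refl) as Hb.
      assert (Hf : 0 < INR (fact n)) by (apply lt_0_INR, lt_O_fact).
      rewrite Rabs_mult. rewrite (Rabs_right (t ^ n / INR (fact n))).
      2:{ apply Rle_ge. unfold Rdiv. apply Rmult_le_pos. apply pow_le; auto.
          left. apply Rinv_0_lt_compat; auto. }
      rewrite Rpow_mult_distr.
      replace (c * (A ^ n * t ^ n * / INR (fact n))) with (t ^ n / INR (fact n) * (A ^ n * c))
        by (unfold Rdiv; ring).
      apply Rmult_le_compat_l; auto.
      unfold Rdiv. apply Rmult_le_pos. apply pow_le; auto.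
      left. apply Rinv_0_lt_compat; auto.
    - apply (ex_series_scal_l (K:=R_AbsRing) (V:=R_NormedModule) c (fun n => scal ((A * t) ^ n) (/ INR (fact n)))). eexists. apply (is_exp_Reals (A * t)). }
  exists (Series a). split.
  - unfold sg_value. apply is_series_ext with a.
    + intros n. unfold a. rewrite duality_n by auto. reflexivity.
    + apply Series_correct; auto.
  - apply Series_correct; auto.
Qed.
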